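(* Let $V_S,V_A',V_A''$ be finite sets of propositional variables with $V_S\cap V_A''=\emptyset$. Let $\mathcal{T}_S^l,\mathcal{T}_S^u$ be propositional theories over $V_S$, let $\mathcal{T}_B'$ be a theory over $V_S\cup V_A'$ and $\mathcal{T}_B''$ a theory over $V_A'\cup V_A''$. Define ${\mathcal{T}_S^l}' := \mathrm{wsc}(\mathcal{T}_S^l;\mathcal{T}_B';V_A')$, ${\mathcal{T}_S^u}' := \mathrm{snc}(\mathcal{T}_S^u;\mathcal{T}_B';V_A')$. Then $\mathrm{wsc}({\mathcal{T}_S^l}';\mathcal{T}_B'';V_A'')\equiv \mathrm{wsc}(\mathcal{T}_S^l;\mathcal{T}_B'\land\mathcal{T}_B'';V_A'')$ and $\mathrm{snc}({\mathcal{T}_S^u}';\mathcal{T}_B'';V_A'')\equiv \mathrm{snc}(\mathcal{T}_S^u;\mathcal{T}_B'\land\mathcal{T}_B'';V_A'')$ (logical equivalence). That is, the tightest layered abstraction obtained in two layers coincides with the tightest abstraction from $\langle\mathcal{T}_S^l,\mathcal{T}_S^u\rangle$ with respect to $\mathcal{T}_B'\land\mathcal{T}_B''$ over $V_A''$.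
   Context: Classical propositional logic. A theory is a finite set of propositional formulas, identified with the conjunction of its elements (the empty theory is identified with $\top$). A formula is ''over'' a set $W$ of propositional variables if all variables occurring in it belong to $W$. Propositional quantifiers are abbreviations: $\exists p\,B := B[p:=\bot]\lor B[p:=\top]$ and $\forall p\,B := B[p:=\bot]\land B[p:=\top]$; for a finite set $V$, $\exists V$ and $\forall V$ denote iterated quantifiers. For formulas $A,\mathcal{T}$ and a set $W$ of variables, let $V$ be the set of variables occurring in $A$ or $\mathcal{T}$ but not in $W$, and define $\mathrm{snc}(A;\mathcal{T};W):=\exists V(\mathcal{T}\land A)$ and $\mathrm{wsc}(A;\mathcal{T};W):=\forall V(\mathcal{T}\to A)$; both are formulas over $W$. *)

(* Defs.v *)
From mathcomp Require Import all_boot.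
Set Implicit Arguments. Unset Strict Implicit. Unset Printing Implicit Defensive.

Inductive form : Type :=
| FVar of nat | FBot | FTop
| FNot of form | FAnd of form & form | FOr of form & form | FImp of form & form.

Fixpoint eval (v : nat -> bool) (f : form) : bool :=
  match f with
  | FVar p => v p | FBot => false | FTop => true
  | FNot g => ~~ eval v g
  | FAnd g h => eval v g && eval v h
  | FOr g h => eval v g || eval v h
  | FImp g h => eval v g ==> eval v h
  end.

Definition fequiv (f g : form) : Prop := forall v, eval v f = eval v g.

Fixpoint fvars (f : form) : seq nat :=
  match f with
  | FVar p => [:: p] | FBot | FTop => [::]
  | FNot g => fvars g
  | FAnd g h | FOr g h | FImp g h => fvars g ++ fvars h
  end.

Definition fover (f : form) (W : seq nat) : Prop := {subset fvars f <= W}.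

Fixpoint subst (p : nat) (c : form) (f : form) : form :=
  match f with
  | FVar q => if q == p then c else FVar q
  | FBot => FBot | FTop => FTop
  | FNot g => FNot (subst p c g)
  | FAnd g h => FAnd (subst p c g) (subst p c h)
  | FOr g h => FOr (subst p c g) (subst p c h)
  | FImp g h => FImp (subst p c g) (subst p c h)
  end.

Definition fex (p : nat) (B : form) : form := FOr (subst p FBot B) (subst p FTop B).
Definition fall (p : nat) (B : form) : form := FAnd (subst p FBot B) (subst p FTop B).
Definition fexs (V : seq nat) (B : form) : form := foldr fex B V.
Definition falls (V : seq nat) (B : form) : form := foldr fall B V.

Definition qvars (A T : form) (W : seq nat) : seq nat :=
  undup [seq p <- fvars A ++ fvars T | p \notin W].

Definition snc (A T : form) (W : seq nat) : form := fexs (qvars A T W) (FAnd T A).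
Definition wsc (A T : form) (W : seq nat) : form := falls (qvars A T W) (FImp T A).

(* Main.v *)
Require Import Defs.
From mathcomp Require Import all_boot.
Set Implicit Arguments. Unset Strict Implicit. Unset Printing Implicit Defensive.

Lemma eval_ext (f : form) (u v : nat -> bool) :
  (forall x, x \in fvars f -> u x = v x) -> eval u f = eval v f.
Proof.
elim: f => [q|||g IH|g IHg h IHh|g IHg h IHh|g IHg h IHh] /= H.
- by apply: H; rewrite inE.
- by []. - by [].
- by rewrite IH.
- by rewrite IHg ?IHh // => x hx; apply: H; rewrite mem_cat hx ?orbT.
- by rewrite IHg ?IHh // => x hx; apply: H; rewrite mem_cat hx ?orbT.
- by rewrite IHg ?IHh // => x hx; apply: H; rewrite mem_cat hx ?orbT.
Qed.

Lemma eval_subst v p c f :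
  eval v (subst p c f) = eval (fun x => if x == p then eval v c else v x) f.
Proof.
elim: f => [q|||g IH|g IHg h IHh|g IHg h IHh|g IHg h IHh] //=; try by rewrite ?IH ?IHg ?IHh.
by case: eqP.
Qed.

Lemma fvars_subst p c f x : fvars c = [::] ->
  (x \in fvars (subst p c f)) = (x != p) && (x \in fvars f).
Proof.
move=> hc.
elim: f => [q|||g IH|g IHg h IHh|g IHg h IHh|g IHg h IHh] /=.
- case: (eqVneq q p) => [->|ne]; first by rewrite hc in_nil mem_seq1 andNb.
  rewrite /= !mem_seq1; case: (eqVneq x q) => [->|] //=; first by rewrite ne.
  by rewrite andbF.
- by rewrite andbF. - by rewrite andbF.
- by [].
- by rewrite !mem_cat IHg IHh andb_orr.
- by rewrite !mem_cat IHg IHh andb_orr.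
- by rewrite !mem_cat IHg IHh andb_orr.
Qed.

Lemma fvars_falls V B x :
  (x \in fvars (falls V B)) = (x \notin V) && (x \in fvars B).
Proof.
elim: V => [|p V IH] //=.
by rewrite mem_cat !fvars_subst // orbb IH in_cons negb_or andbA.
Qed.

Lemma fvars_fexs V B x :
  (x \in fvars (fexs V B)) = (x \notin V) && (x \in fvars B).
Proof.
elim: V => [|p V IH] //=.
by rewrite mem_cat !fvars_subst // orbb IH in_cons negb_or andbA.
Qed.

Lemma falls_sem V B v :
  eval v (falls V B) <->
  (forall u, (forall x, x \in fvars B -> x \notin V -> u x = v x) -> eval u B).
Proof.
elim: V v => [|p V IH] v /=.
  split; last by move=> H; apply: H.
  by move=> H u Hu; rewrite (@eval_ext _ u v) // => x hx; apply: Hu.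
rewrite !eval_subst /=; split.
- move=> /andP[H0 H1] u Hu.
  have Hb : eval (fun x => if x == p then u p else v x) (falls V B) by case: (u p).
  move/IH: Hb; apply=> x hx hV; case: eqP => [->|/eqP ne] //.
  by apply: Hu => //; rewrite in_cons negb_or ne hV.
- move=> H; apply/andP; split; apply/IH => u Hu; apply: H => x hx;
  rewrite in_cons negb_or => /andP[ne hV]; by rewrite Hu // (negbTE ne).
Qed.

Lemma fexs_sem V B v :
  eval v (fexs V B) <->
  (exists u, (forall x, x \in fvars B -> x \notin V -> u x = v x) /\ eval u B).
Proof.
elim: V v => [|p V IH] v /=.
  split; first by move=> H; exists v.
  by case=> u [Hu Hb]; rewrite -(@eval_ext _ u v) // => x hx; apply: Hu.
rewrite !eval_subst /=; split.
- case/orP => /IH [u [Hu Hb]]; exists u; split => // x hx;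
  rewrite in_cons negb_or => /andP[ne hV]; by rewrite Hu // (negbTE ne).
- case=> u [Hu Hb].
  have : eval (fun x => if x == p then u p else v x) (fexs V B).
    apply/IH; exists u; split => // x hx hV; case: eqP => [->|/eqP ne] //.
    by apply: Hu => //; rewrite in_cons negb_or ne hV.
  by case: (u p) => H; apply/orP; [right|left].
Qed.

Lemma mem_qvars A T W x :
  (x \in qvars A T W) = ((x \in fvars A) || (x \in fvars T)) && (x \notin W).
Proof. by rewrite /qvars mem_undup mem_filter mem_cat andbC. Qed.

Lemma nq A T W x : (x \in fvars A) || (x \in fvars T) -> x \notin qvars A T W -> x \in W.
Proof. by rewrite mem_qvars => ->; rewrite negbK. Qed.

Lemma key (VS VA' VA'' : seq nat) (A TB' TB'' L : form) (v u w : nat -> bool) :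
  (forall x, x \in VS -> x \notin VA'') ->
  fover A VS -> fover TB' (VS ++ VA') -> fover TB'' (VA' ++ VA'') ->
  (forall x, x \in fvars L = ((x \in fvars A) || (x \in fvars TB')) && (x \in VA')) ->
  (forall x, (x \in fvars L) || (x \in fvars TB'') -> x \in VA'' -> u x = v x) ->
  (forall x, (x \in fvars A) || (x \in fvars TB') -> x \in VA' -> w x = u x) ->
  let w' := fun x => if (x \in fvars A) || (x \in fvars TB') then w x else u x in
  [/\ forall x, [|| x \in fvars A, x \in fvars TB' | x \in fvars TB''] -> x \in VA'' -> w' x = v x,
     eval w' A = eval w A, eval w' TB' = eval w TB' & eval w' TB'' = eval u TB''].
Proof.
move=> hd hA h1 h2 hL Hu Hw w'.
have aux : forall x, (x \in fvars A) || (x \in fvars TB') -> x \in VA' ++ VA'' -> x \in VA'.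
  move=> x hP hx.
  have : x \in VS ++ VA' by case/orP: hP => [/hA|/h1]; rewrite ?mem_cat => -> //.
  rewrite !mem_cat in hx * => /orP[hs|] //.
  by case/orP: hx => // /(negP (hd _ hs)).
split.
- move=> x hx hx''; rewrite /w'; case: ifP => hP.
  have hx' : x \in VA' by apply: aux; rewrite // mem_cat hx'' orbT.
  by rewrite Hw // Hu // hL hP hx'.
  by apply: Hu => //; move: hx; rewrite orbA hP /= => ->; rewrite orbT.
- by apply: eval_ext => x hx; rewrite /w' hx.
- by apply: eval_ext => x hx; rewrite /w' hx orbT.
- apply: eval_ext => x hx; rewrite /w'; case: ifP => // hP.
  by apply: Hw => //; apply: aux => //; apply: h2.
Qed.

Theorem mainTheorem6 (VS VA' VA'' : seq nat) (TSl TSu TB' TB'' : form) :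
  (forall x, x \in VS -> x \notin VA'') ->
  fover TSl VS -> fover TSu VS ->
  fover TB' (VS ++ VA') -> fover TB'' (VA' ++ VA'') ->
  fequiv (wsc (wsc TSl TB' VA') TB'' VA'') (wsc TSl (FAnd TB' TB'') VA'') /\
  fequiv (snc (snc TSu TB' VA') TB'' VA'') (snc TSu (FAnd TB' TB'') VA'').
Proof.
move=> hd hl hu h1 h2; split => v.
- set L := wsc TSl TB' VA'.
  have hL : forall x, x \in fvars L = ((x \in fvars TSl) || (x \in fvars TB')) && (x \in VA').
    move=> x; rewrite /L /wsc fvars_falls mem_qvars /= mem_cat.
    by case: (x \in fvars TSl) (x \in fvars TB') (x \in VA') => [] [] [].
  apply/idP/idP.
  + move=> /falls_sem H; apply/falls_sem => w Hw /=.
    have Hw' : forall x, (x \in fvars L) || (x \in fvars TB'') -> x \in VA'' -> w x = v x.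
      move=> x hx hx''; apply: Hw; last by rewrite mem_qvars hx'' andbF.
      rewrite /= !mem_cat; case/orP: hx => [|->]; last by rewrite !orbT.
      by rewrite hL => /andP[/orP[] -> _]; rewrite ?orbT.
    have /implyP H' : eval w (FImp TB'' L).
      apply: H => x; rewrite /= mem_cat orbC => hx /(nq hx) hx''; exact: Hw'.
    apply/implyP => /andP[e1 e2].
    have {H'} := H' e2.
    move=> /falls_sem /(_ w (fun _ _ _ => erefl)) /=.
    by rewrite e1.
  + move=> /falls_sem H; apply/falls_sem => u Hu /=; apply/implyP => e2.
    apply/falls_sem => w Hw /=.
    have Hu' : forall x, (x \in fvars L) || (x \in fvars TB'') -> x \in VA'' -> u x = v x.
      move=> x hx hx''; apply: Hu; last by rewrite mem_qvars hx'' andbF.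
      by rewrite /= mem_cat orbC.
    have Hw' : forall x, (x \in fvars TSl) || (x \in fvars TB') -> x \in VA' -> w x = u x.
      move=> x hx hx'; apply: Hw; last by rewrite mem_qvars hx' andbF.
      by rewrite /= mem_cat orbC.
    case: (key hd hl h1 h2 hL Hu' Hw') => Hag eA eB eC.
    have := H (fun x => if (x \in fvars TSl) || (x \in fvars TB') then w x else u x).
    rewrite /= eA eB eC e2 andbT; apply => x hx hq.
    have hx'' : x \in VA''.
      apply: (nq _ hq); move: hx; rewrite /= !mem_cat.
      by case: (x \in fvars TSl) (x \in fvars TB') (x \in fvars TB'') => [] [] [].
    apply: Hag => //; move: hx; rewrite /= !mem_cat.
    by case: (x \in fvars TSl) (x \in fvars TB') (x \in fvars TB'') => [] [] [].
- set L := snc TSu TB' VA'.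
  have hL : forall x, x \in fvars L = ((x \in fvars TSu) || (x \in fvars TB')) && (x \in VA').
    move=> x; rewrite /L /snc fvars_fexs mem_qvars /= mem_cat.
    by case: (x \in fvars TSu) (x \in fvars TB') (x \in VA') => [] [] [].
  apply/idP/idP.
  + move=> /fexs_sem [u [Hu /andP[e2 /fexs_sem [w [Hw /andP[e1 e0]]]]]].
    have Hu' : forall x, (x \in fvars L) || (x \in fvars TB'') -> x \in VA'' -> u x = v x.
      move=> x hx hx''; apply: Hu; last by rewrite mem_qvars hx'' andbF.
      by rewrite /= mem_cat orbC.
    have Hw' : forall x, (x \in fvars TSu) || (x \in fvars TB') -> x \in VA' -> w x = u x.
      move=> x hx hx'; apply: Hw; last by rewrite mem_qvars hx' andbF.
      by rewrite /= mem_cat orbC.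
    case: (key hd hu h1 h2 hL Hu' Hw') => Hag eA eB eC.
    apply/fexs_sem; exists (fun x => if (x \in fvars TSu) || (x \in fvars TB') then w x else u x).
    split; last first.
      apply/andP; split; [apply/andP; split|].
      - exact: (etrans eB e1).
      - exact: (etrans eC e2).
      - exact: (etrans eA e0).
    move=> x hx hq.
    have hx'' : x \in VA''.
      apply: (nq _ hq); move: hx; rewrite /= !mem_cat.
      by case: (x \in fvars TSu) (x \in fvars TB') (x \in fvars TB'') => [] [] [].
    apply: Hag => //; move: hx; rewrite /= !mem_cat.
    by case: (x \in fvars TSu) (x \in fvars TB') (x \in fvars TB'') => [] [] [].
  + move=> /fexs_sem [w [Hw /= /andP[/andP[e1 e2] e0]]].
    apply/fexs_sem; exists w; split.
      move=> x hx hq.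
      have hx'' : x \in VA'' by apply: (nq _ hq); rewrite /= mem_cat orbC in hx.
      apply: Hw; last by rewrite mem_qvars hx'' andbF.
      move: hx; rewrite /= !mem_cat hL.
      by case: (x \in fvars TSu) (x \in fvars TB') (x \in fvars TB'') (x \in VA') => [] [] [] [].
    rewrite /= e2 /=; apply/fexs_sem; exists w; split => //.
    by rewrite /= e1 e0.
Qed.
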